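(* Let $W_{32,17}$ be the $32\times 32$ matrix $\begin{pmatrix} A & B\\ -B^T & A^T\end{pmatrix}$, where $A$ and $B$ are $16\times 16$ negacirculant matrices with first rows $r_A=(0,0,1,1,0,0,0,0,1,0,0,0,0,1,1,0)$ and $r_B=(0,1,-1,-1,0,-1,1,0,1,-1,1,1,1,0,-1,1)$ (a skew-symmetric weighing matrix of order $32$ and weight $17$). Let $C_3(W_{32,17})$ be the ternary code of length $64$ with generator matrix $(I\ \ W_{32,17})$, entries read modulo $3$. Then $A_3(C_3(W_{32,17}))$ contains a $7k$-frame and a $23k$-frame for every positive integer $k$.
   Context: An $N\times N$ negacirculant matrix with first row $(r_0,\dots,r_{N-1})$ is the matrix whose $(i,j)$ entry ($0\le i,j\le N-1$) is $r_{j-i}$ if $j\ge i$ and $-r_{N+j-i}$ if $j<i$. A skew-symmetric weighing matrix of order $n$ and weight $w$ is an $n\times n$ $(0,\pm1)$-matrix $W$ with $W^T=-W$ and $WW^T=wI$. Construction A: with $\rho:\mathbb{Z}_k\to\mathbb{Z}$ sending $0,1,\dots,k-1$ to $0,1,\dots,k-1$, for a $\mathbb{Z}_k$-code $C$ of length $N$ set $A_k(C)=\frac{1}{\sqrt{k}}\{\rho(C)+k\mathbb{Z}^N\}$. A $t$-frame of a lattice in dimension $N$ is a set of $N$ lattice vectors $f_1,\dots,f_N$ with $(f_i,f_j)=t\,\delta_{i,j}$. *)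

(* Defs.v *)
From HB Require Import structures.
From mathcomp Require Import all_boot all_order all_algebra.
Set Implicit Arguments. Unset Strict Implicit. Unset Printing Implicit Defensive.
Import Order.TTheory GRing.Theory Num.Theory.
Local Open Scope ring_scope.

Definition negacirc (N : nat) (r : seq int) : 'M[int]_N :=
  \matrix_(i < N, j < N)
    if (i <= j)%N then r`_(j - i) else - r`_(N + j - i).

Definition rA : seq int := [:: 0; 0; 1; 1; 0; 0; 0; 0; 1; 0; 0; 0; 0; 1; 1; 0].
Definition rB : seq int := [:: 0; 1; -1; -1; 0; -1; 1; 0; 1; -1; 1; 1; 1; 0; -1; 1].

Definition nA : 'M[int]_16 := negacirc 16 rA.
Definition nB : 'M[int]_16 := negacirc 16 rB.

Definition W32_17 : 'M[int]_(16 + 16) := block_mx nA nB (- nB^T) nA^T.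

Definition red3 (z : int) : 'F_3 := z%:~R.

Definition G3 : 'M['F_3]_(16 + 16, (16 + 16) + (16 + 16)) :=
  row_mx 1%:M (map_mx red3 W32_17).

Definition C3W (c : 'rV['F_3]_((16 + 16) + (16 + 16))) : Prop :=
  exists m : 'rV['F_3]_(16 + 16), c = m *m G3.

(* Construction A: A_k(C) = (1/sqrt k) (rho(C) + k Z^N); for k = 3, a real
   vector v lies in A_3(C) iff v = (1/sqrt 3) x with x in Z^N and x mod 3 in C. *)
Definition constrA3 (R : rcfType) (N : nat) (C : 'rV['F_3]_N -> Prop)
    (v : 'rV[R]_N) : Prop :=
  exists x : 'rV[int]_N,
    C (map_mx red3 x) /\ v = (Num.sqrt (3 : R))^-1 *: map_mx (fun z : int => z%:~R) x.

Definition dotR (R : rcfType) (N : nat) (u v : 'rV[R]_N) : R :=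
  \sum_(l < N) u 0 l * v 0 l.

Definition has_frame (R : rcfType) (N : nat) (L : 'rV[R]_N -> Prop) (t : R) : Prop :=
  exists f : 'I_N -> 'rV[R]_N,
    (forall i, L (f i)) /\
    (forall i j, dotR (f i) (f j) = if i == j then t else 0).

(* Main.v *)
From Stdlib Require Import ZArith Lia.
Local Open Scope Z_scope.
Lemma red a m : 0 < m -> exists k, -m < 2*(a - m*k) <= m.
Proof.
intros Hm. exists ((2*a+m-1)/(2*m)).
pose proof (Z.div_mod (2*a+m-1) (2*m) ltac:(lia)).
pose proof (Z.mod_pos_bound (2*a+m-1) (2*m) ltac:(lia)).
set (q := (2*a+m-1)/(2*m)) in *. set (s := (2 * a + m - 1) mod (2 * m)) in *.
lia.
Qed.
Lemma L1 b m : -m < 2*b <= m -> 4*(b*b) <= m*m.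
Proof. intros. nia. Qed.
Lemma L2 b m : -m < 2*b <= m -> 4*(b*b) = m*m -> 2*b = m.
Proof. intros. assert ((2*b-m)*(2*b+m) = 0) by lia.
apply Z.mul_eq_0 in H1. lia. Qed.
Lemma L3 a b c d : a*a+b*b+c*c+d*d = 0 -> a = 0 /\ b = 0 /\ c = 0 /\ d = 0.
Proof. intros. nia. Qed.
Definition S4 (n:Z) := exists a b c d, n = a*a+b*b+c*c+d*d.

Lemma S4_mul x y : S4 x -> S4 y -> S4 (x*y).
Proof.
intros [a1 [a2 [a3 [a4 ->]]]] [b1 [b2 [b3 [b4 ->]]]].
exists (a1*b1+a2*b2+a3*b3+a4*b4), (a1*b2-a2*b1+a3*b4-a4*b3),
  (a1*b3-a2*b4-a3*b1+a4*b2), (a1*b4+a2*b3-a3*b2-a4*b1). ring.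
Qed.

Lemma L4 m r s : 0 < m -> m * r = s -> 0 <= s -> 4*s <= 4*(m*m) -> 0 <= r <= m.
Proof. intros. nia. Qed.

Lemma descent p : 1 < p -> (forall d q, 1 < d < p -> p <> d * q) ->
  forall n : nat, forall m, 0 < m <= Z.of_nat n -> m < p -> S4 (m*p) -> S4 p.
Proof.
intros Hp Hpr n. induction n as [|n IH]; intros m Hm Hmp HS; [lia|].
destruct (Z.eq_dec m 1) as [->|Hm1]; [now rewrite Z.mul_1_l in HS|].
destruct HS as [a1 [a2 [a3 [a4 HS]]]].
destruct (red a1 m ltac:(lia)) as [k1 B1].
destruct (red a2 m ltac:(lia)) as [k2 B2].
destruct (red a3 m ltac:(lia)) as [k3 B3].
destruct (red a4 m ltac:(lia)) as [k4 B4].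
set (b1 := a1 - m*k1) in *. set (b2 := a2 - m*k2) in *.
set (b3 := a3 - m*k3) in *. set (b4 := a4 - m*k4) in *.
set (r := p - 2*(a1*k1+a2*k2+a3*k3+a4*k4) + m*(k1*k1+k2*k2+k3*k3+k4*k4)).
assert (Hb : m*r = b1*b1+b2*b2+b3*b3+b4*b4).
{ assert (b1*b1+b2*b2+b3*b3+b4*b4 - m*r = a1*a1+a2*a2+a3*a3+a4*a4 - m*p)
    by (unfold b1,b2,b3,b4,r; ring). lia. }
pose proof (L1 _ _ B1) as E1. pose proof (L1 _ _ B2) as E2.
pose proof (L1 _ _ B3) as E3. pose proof (L1 _ _ B4) as E4.
assert (Q1 : 0 <= b1*b1) by apply Z.square_nonneg.
assert (Q2 : 0 <= b2*b2) by apply Z.square_nonneg.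
assert (Q3 : 0 <= b3*b3) by apply Z.square_nonneg.
assert (Q4 : 0 <= b4*b4) by apply Z.square_nonneg.
destruct (L4 m r _ ltac:(lia) Hb ltac:(lia) ltac:(lia)) as [Hr0 Hrm].
destruct (Z.eq_dec r 0) as [Hr|Hr].
{ exfalso. rewrite Hr, Z.mul_0_r in Hb.
  destruct (L3 b1 b2 b3 b4 (eq_sym Hb)) as [C1 [C2 [C3 C4]]].
  apply (Hpr m (k1*k1+k2*k2+k3*k3+k4*k4)); [lia|].
  apply (Z.mul_reg_l _ _ m); [lia|].
  assert (a1 = m*k1) by lia. assert (a2 = m*k2) by lia.
  assert (a3 = m*k3) by lia. assert (a4 = m*k4) by lia.
  rewrite HS. clear -H H0 H1 H2. subst a1 a2 a3 a4. ring. }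
destruct (Z.eq_dec r m) as [Hr'|Hr'].
{ exfalso. rewrite Hr' in Hb.
  assert (F1 : 4*(b1*b1) = m*m) by lia.
  assert (F2 : 4*(b2*b2) = m*m) by lia.
  assert (F3 : 4*(b3*b3) = m*m) by lia.
  assert (F4 : 4*(b4*b4) = m*m) by lia.
  pose proof (L2 _ _ B1 F1) as G1. pose proof (L2 _ _ B2 F2) as G2.
  pose proof (L2 _ _ B3 F3) as G3. pose proof (L2 _ _ B4 F4) as G4.
  apply (Hpr m (1 + (k1*k1+k1) + (k2*k2+k2) + (k3*k3+k3) + (k4*k4+k4))); [lia|].
  apply (Z.mul_reg_l _ _ (4*m)); [lia|].
  assert (H1 : 2*a1 = m*(1+2*k1)) by lia.
  assert (H2 : 2*a2 = m*(1+2*k2)) by lia.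
  assert (H3 : 2*a3 = m*(1+2*k3)) by lia.
  assert (H4 : 2*a4 = m*(1+2*k4)) by lia.
  transitivity ((2*a1)*(2*a1)+(2*a2)*(2*a2)+(2*a3)*(2*a3)+(2*a4)*(2*a4)).
  - replace (4*m*p) with (4*(m*p)) by ring. rewrite HS. ring.
  - rewrite H1, H2, H3, H4. ring. }
apply (IH r); [lia|lia|].
exists (p - (a1*k1+a2*k2+a3*k3+a4*k4)),
  (a2*k1 - a1*k2 + a4*k3 - a3*k4),
  (a3*k1 - a1*k3 + a2*k4 - a4*k2),
  (a4*k1 + a3*k2 - a2*k3 - a1*k4).
apply (Z.mul_reg_l _ _ (m*m)); [apply Z.neq_mul_0; lia|].
transitivity ((a1*a1+a2*a2+a3*a3+a4*a4)*(b1*b1+b2*b2+b3*b3+b4*b4)).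
{ rewrite <- Hb, <- HS. ring. }
assert (Z1 : a1*b1+a2*b2+a3*b3+a4*b4 = m*(p - (a1*k1+a2*k2+a3*k3+a4*k4))).
{ assert (a1*b1+a2*b2+a3*b3+a4*b4 - m*(p - (a1*k1+a2*k2+a3*k3+a4*k4))
     = a1*a1+a2*a2+a3*a3+a4*a4 - m*p) by (unfold b1,b2,b3,b4; ring). lia. }
assert (Z2 : a1*b2-a2*b1+a3*b4-a4*b3 = m*(a2*k1 - a1*k2 + a4*k3 - a3*k4))
  by (unfold b1,b2,b3,b4; ring).
assert (Z3 : a1*b3-a2*b4-a3*b1+a4*b2 = m*(a3*k1 - a1*k3 + a2*k4 - a4*k2))
  by (unfold b1,b2,b3,b4; ring).
assert (Z4 : a1*b4+a2*b3-a3*b2-a4*b1 = m*(a4*k1 + a3*k2 - a2*k3 - a1*k4))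
  by (unfold b1,b2,b3,b4; ring).
transitivity ((a1*b1+a2*b2+a3*b3+a4*b4)*(a1*b1+a2*b2+a3*b3+a4*b4)
  + (a1*b2-a2*b1+a3*b4-a4*b3)*(a1*b2-a2*b1+a3*b4-a4*b3)
  + (a1*b3-a2*b4-a3*b1+a4*b2)*(a1*b3-a2*b4-a3*b1+a4*b2)
  + (a1*b4+a2*b3-a3*b2-a4*b1)*(a1*b4+a2*b3-a3*b2-a4*b1)).
{ ring. }
rewrite Z1, Z2, Z3, Z4. ring.
Qed.

Close Scope Z_scope.
Require Import Defs.
From HB Require Import structures.
From mathcomp Require Import all_boot all_order all_algebra.
From mathcomp Require Import zify ring.
Import Order.TTheory GRing.Theory Num.Theory.

Lemma sq_inj p x y : prime p -> (2*x < p)%N -> (2*y < p)%N ->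
  x*x = y*y %[mod p] -> x = y.
Proof.
move=> pp hx hy.
wlog le: x y hx hy / (y <= x)%N.
  move=> H; case: (leqP y x) => h; first exact: H.
  by move=> e; apply/esym/H => //; [exact: ltnW].
move/eqP; rewrite eqn_mod_dvd; last by rewrite leq_mul.
have ->: x*x - y*y = (x-y)*(x+y) by rewrite mulnBl !mulnDr; lia.
rewrite Euclid_dvdM // => /orP[] h.
  have: (x - y < p)%N by lia.
  case E: (x - y) => [|n]; first lia.
  by move=> lt; move: h; rewrite E => /dvdn_leq => /(_ isT); lia.
have: (x + y < p)%N by lia.
case E: (x + y) => [|n]; first lia.
by move=> lt; move: h; rewrite E => /dvdn_leq => /(_ isT); lia.
Qed.

Lemma pigeon p : prime p -> odd p ->
  exists x y, [/\ (2*x < p)%N, (2*y < p)%N & (p %| x*x + y*y + 1)%N].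
Proof.
move=> pp op.
have p0 : (0 < p)%N by exact: prime_gt0.
pose h := p./2.+1.
have hx (x : 'I_h) : (2 * x < p)%N.
  have := ltn_ord x; rewrite /h => lt.
  have := odd_double_half p; rewrite op; lia.
pose f (x : 'I_h) : 'I_p := Ordinal (ltn_pmod (x*x) p0).
have gp (y : 'I_h) : (p - 1 - (y*y %% p) < p)%N by lia.
pose g (y : 'I_h) : 'I_p := Ordinal (gp y).
have fi : injective f.
  move=> x y /(congr1 val) /= e; apply/val_inj; exact: (sq_inj _ _ _ pp (hx x) (hx y)).
have gi : injective g.
  move=> x y /(congr1 val) /= e; apply/val_inj; apply: (sq_inj _ _ _ pp (hx x) (hx y)).
  have := ltn_pmod (x*x) p0; have := ltn_pmod (y*y) p0. rewrite /eqn. lia.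
have : ~~ [disjoint f @: setT & g @: setT].
  apply/negP => dj.
  have := max_card (mem (f @: setT :|: g @: setT)).
  rewrite cardsU (disjoint_setI0 dj) cards0 subn0 !card_imset // cardsT !card_ord /h.
  have := odd_double_half p; rewrite op -muln2; lia.
case/pred0Pn => z /andP [/imsetP [x _ ->] /imsetP [y _ /(congr1 val) /= e]].
exists x, y; split; [exact: hx | exact: hx |].
apply/dvdnP; exists (x*x %/ p + y*y %/ p + 1).
have := ltn_pmod (y*y) p0.
rewrite {1}(divn_eq (x*x) p) {1}(divn_eq (y*y) p) e; lia.
Qed.

Lemma S4_nat (n : nat) : S4 (Z.of_nat n).
Proof.
elim/ltn_ind: n => n IH.
case: (leqP n 1) => hn.
  case: n hn IH => [|[|//]] _ _; first by exists Z0, Z0, Z0, Z0.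
  by exists (Z.of_nat 1), Z0, Z0, Z0.
have pp := pdiv_prime hn. have pd := pdiv_dvd n.
have p1 := prime_gt1 pp.
case: (ltnP (pdiv n) n) => hp.
  have nq : n = (n %/ pdiv n) * pdiv n by rewrite divnK.
  have q0 : (n %/ pdiv n < n)%N by rewrite ltn_Pdiv // ltnW.
  have -> : Z.of_nat n = Z.mul (Z.of_nat (n %/ pdiv n)) (Z.of_nat (pdiv n)).
    by rewrite {1}nq; lia.
  by apply: S4_mul; apply: IH.
have pn : pdiv n = n by apply/eqP; rewrite eqn_leq hp dvdn_leq // ltnW.
rewrite pn in pp p1.
case: (even_prime pp) => [->|op]; first by exists (Z.of_nat 1), (Z.of_nat 1), Z0, Z0.
have [x [y [hx hy /dvdnP [q hq]]]] := pigeon _ pp op.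
have q0 : (0 < q)%N by move: hq; case: q => //=; lia.
have qp : (q < n)%N by nia.
apply: (descent (Z.of_nat n) _ _ q (Z.of_nat q)); try lia.
- move=> d r hd e.
  have d' : (Z.to_nat d %| n)%N.
    apply/dvdnP; exists (Z.to_nat r). nia.
  case/primeP: pp => _ /(_ _ d') /orP[] /eqP; lia.
- exists (Z.of_nat x), (Z.of_nat y), (Z.of_nat 1), Z0. lia.
Qed.

Lemma four_sq (k : nat) : exists a b c d : nat, k = a*a+b*b+c*c+d*d.
Proof.
have [a [b [c [d e]]]] := S4_nat k.
exists (Z.abs_nat a), (Z.abs_nat b), (Z.abs_nat c), (Z.abs_nat d). nia.
Qed.

Local Open Scope ring_scope.
Definition ne (r : seq int) (i j : nat) : int :=
  if (i <= j)%N then r`_(j - i) else - r`_(16 + j - i).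
Definition wf (i j : nat) : int :=
  if (i < 16)%N then (if (j < 16)%N then ne rA i j else ne rB i (j - 16))
  else (if (j < 16)%N then - ne rB j (i - 16) else ne rA (j - 16) (i - 16)).

Lemma W_E (i j : 'I_(16+16)) : W32_17 i j = wf i j.
Proof.
rewrite /W32_17 /wf.
case: split_ordP => i' ->; case: split_ordP => j' ->;
  rewrite ?block_mxEul ?block_mxEur ?block_mxEdl ?block_mxEdr /nA /nB /negacirc !mxE /ne;
  have := ltn_ord i'; have := ltn_ord j'; move=> hj hi;
  by rewrite /= ?addKn.
Qed.

Definition sumi (g : nat -> int) (n : nat) : int :=
  foldr (fun l acc => g l + acc) 0 (iota 0 n).

Lemma sumiE n (g : nat -> int) : \sum_(l < n) g l = sumi g n.
Proof.
rewrite -(big_mkord xpredT) /index_iota subn0 /sumi.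
by elim: (iota 0 n) => [|x s IH]; rewrite ?big_nil ?big_cons ?IH.
Qed.

Lemma chk1 : all (fun i => all (fun j => wf j i == - wf i j) (iota 0 32)) (iota 0 32).
Proof. by vm_compute. Qed.

Lemma chk2 : all (fun i => all (fun j =>
   sumi (fun l => wf i l * wf j l) 32 == 17 *+ (i == j)) (iota 0 32)) (iota 0 32).
Proof. by vm_compute. Qed.

Lemma W_tr : W32_17^T = - W32_17.
Proof.
move: W_E; move: W32_17 => W WE.
apply/matrixP => i j; rewrite !mxE !WE.
have := chk1 => /allP /(_ i); rewrite mem_iota ltn_ord => /(_ isT) /allP /(_ j).
by rewrite mem_iota ltn_ord => /(_ isT) /eqP.
Qed.

Lemma W_sq : W32_17 *m W32_17^T = 17%:M.
Proof.
move: W_E; move: W32_17 => W WE.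
apply/matrixP => i j; rewrite !mxE.
rewrite (eq_bigr (fun l : 'I_32 => wf i l * wf j l)); last by move=> l _; rewrite !mxE !WE.
rewrite (sumiE 32 (fun l => wf i l * wf j l)).
have := chk2 => /allP /(_ i); rewrite mem_iota ltn_ord => /(_ isT) /allP /(_ j).
by rewrite mem_iota ltn_ord => /(_ isT) /eqP ->.
Qed.

Definition Xt n (W : 'M[int]_n) (a b : int) : 'M[int]_(n + n) := block_mx a%:M (b *: W) (b *: W) a%:M.

Arguments Xt {n}.

Lemma Xt_gram n (W : 'M[int]_n) (Wtr : W^T = - W) (Wsq : W *m W^T = 17%:M) a b :
  Xt W a b *m (Xt W a b)^T = (a*a + 17*(b*b))%:M.
Proof.
rewrite /Xt tr_block_mx !tr_scalar_mx !linearZ /= mulmx_block scalar_mx_block.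
rewrite !mul_scalar_mx !mul_mx_scalar -!scalemxAl -!scalemxAr Wsq Wtr.
congr block_mx; apply/matrixP => i j; rewrite !mxE; ring.
Qed.

Definition sm n (x : int) : 'M[int]_n := x%:M.
Definition Mq n (a b c d : int) : 'M[int]_((n + n) + (n + n)) :=
  block_mx (block_mx (sm n a) (sm n b) (sm n (-b)) (sm n a))
           (block_mx (sm n c) (sm n d) (sm n (-d)) (sm n c))
           (block_mx (sm n (-c)) (sm n d) (sm n (-d)) (sm n (-c)))
           (block_mx (sm n a) (sm n (-b)) (sm n b) (sm n a)).

Lemma Mq_gram n a b c d : Mq n a b c d *m (Mq n a b c d)^T = (a*a+b*b+c*c+d*d)%:M.
Proof.
rewrite /Mq /sm !tr_block_mx !tr_scalar_mx !mulmx_block !scalar_mx_block.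
rewrite !add_block_mx -!block_mx0.
rewrite -!scalar_mxM.
by congr block_mx; congr block_mx; apply/matrixP => i j; rewrite !mxE; ring.
Qed.

Lemma WW : W32_17 *m W32_17 = - 17%:M.
Proof. by rewrite -W_sq W_tr mulmxN opprK. Qed.

Lemma redM m n p (A : 'M[int]_(m, n)) (B : 'M[int]_(n, p)) :
  map_mx red3 (A *m B) = map_mx red3 A *m map_mx red3 B.
Proof. exact: map_mxM. Qed.

Lemma redS n x : map_mx red3 (x%:M : 'M[int]_n) = (red3 x)%:M.
Proof. exact: map_scalar_mx. Qed.
Lemma redZ m n x (A : 'M[int]_(m, n)) : map_mx red3 (x *: A) = red3 x *: map_mx red3 A.
Proof. exact: map_mxZ. Qed.
Lemma redN m n (A : 'M[int]_(m, n)) : map_mx red3 (- A) = - map_mx red3 A.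
Proof. exact: map_mxN. Qed.

Lemma red17 : red3 17 = -1.
Proof. by apply/val_inj. Qed.

Lemma codeword (a b c d al be : int) (hab : red3 al = red3 be) s :
  C3W (map_mx red3 (row s (Mq 16 a b c d *m Xt W32_17 al be))).
Proof.
exists (row s (map_mx red3 (Mq 16 a b c d) *m (red3 be *: col_mx 1%:M (map_mx red3 W32_17)))).
rewrite map_row -row_mul; congr row.
rewrite redM -mulmxA; congr (_ *m _).
rewrite -scalemxAl /G3 mul_col_row -redM WW !mul1mx mulmx1.
rewrite /Xt map_block_mx !redS !redZ hab scale_block_mx scalemx1 redN redS.
congr block_mx; apply/matrixP => i j; rewrite !mxE red17; ring.
Qed.

Lemma frame_of (R : rcfType) (X : 'M[int]_(16+16+(16+16))) (s0 : int) (t : R) :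
  X *m X^T = s0%:M -> (s0%:~R : R) = 3 * t -> (forall s, C3W (map_mx red3 (row s X))) ->
  has_frame (@constrA3 R _ C3W) t.
Proof.
move=> XX st cw.
exists (fun s => (Num.sqrt 3)^-1 *: map_mx (fun z : int => z%:~R) (row s X)); split.
  by move=> s; exists (row s X); split.
move=> i j; rewrite /dotR.
have: (X *m X^T) i j = s0 *+ (i == j) by rewrite XX mxE.
rewrite mxE => e.
have q : (Num.sqrt (3:R))^-1 * (Num.sqrt 3)^-1 = 3^-1.
  by rewrite -invfM -expr2 sqr_sqrtr // ler0n.
rewrite (eq_bigr (fun l => (Num.sqrt 3)^-1 * (Num.sqrt 3)^-1 * (X i l * X^T l j)%:~R)); last first.
  by move=> l _; rewrite !mxE intrM; ring.
rewrite -mulr_sumr -rmorph_sum /= e q.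
case: (i == j) => /=; last by rewrite mulr0n mulr0.
by rewrite mulr1n st mulrA mulVf ?mul1r // pnatr_eq0.
Qed.

Theorem lemma7p2 (R : rcfType) (k : nat) (hk : (0 < k)%N) :
  has_frame (@constrA3 R _ C3W) (7 * k)%:R /\ has_frame (@constrA3 R _ C3W) (23 * k)%:R.
Proof.
have [a [b [c [d kE]]]] := four_sq k.
pose M := Mq 16 a%:R b%:R c%:R d%:R.
have MM : M *m M^T = (k%:R : int)%:M by rewrite Mq_gram kE !natrD !natrM.
have gen (al be : int) (t0 : nat) : red3 al = red3 be -> al*al + 17*(be*be) = (3*t0)%:R ->
    has_frame (@constrA3 R _ C3W) (t0*k)%:R.
  move=> hab hg.
  apply: (@frame_of R (M *m Xt W32_17 al be) ((3*t0)%:R * k%:R)).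
  - rewrite trmx_mul mulmxA -(mulmxA M) (Xt_gram _ _ W_tr W_sq).
    rewrite (_ : _ + _ = (3*t0)%:R); last exact: hg.
    by rewrite mul_mx_scalar -scalemxAl MM scale_scalar_mx.
  - by rewrite rmorphM /= !rmorph_nat !natrM mulrA.
  - by move=> s; exact: codeword.
split.
- by apply: (gen (-2) 1 7) => //; apply/val_inj.
- by apply: (gen (-1) 2 23) => //; apply/val_inj.
Qed.
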